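(* For $\lambda\in\mathbb{R}$ let $\mathfrak{n}_\lambda$ be the real $7$-dimensional Lie algebra with basis $e_1,\dots,e_7$ whose nonzero brackets (up to antisymmetry) are $[e_1,e_2]=e_4$, $[e_1,e_3]=e_5$, $[e_1,e_6]=e_7$, $[e_2,e_3]=e_6$, $[e_2,e_5]=\lambda e_7$, $[e_3,e_4]=(\lambda-1)e_7$. Then $\mathfrak{n}_\lambda$ is an Einstein nilradical if and only if $\lambda\notin\{0,1\}$.
   Context: A real nilpotent Lie algebra $\mathfrak{n}$ is called an Einstein nilradical if it admits an inner product such that the left-invariant Riemannian metric it defines on the simply connected nilpotent Lie group with Lie algebra $\mathfrak{n}$ is a nilsoliton, i.e. its Ricci operator satisfies $\mathrm{Ric}=c\,\mathrm{Id}+D$ for some $c\in\mathbb{R}$ and some derivation $D$ of $\mathfrak{n}$. Brackets of basis elements not listed are zero. *)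

(* Defs.v *)
From HB Require Import structures.
From mathcomp Require Import all_boot all_order all_algebra.
From mathcomp Require Import reals.
Set Implicit Arguments. Unset Strict Implicit. Unset Printing Implicit Defensive.
Import Order.TTheory GRing.Theory Num.Theory.
Local Open Scope ring_scope.

Section LieMetric.
Variables (R : realType) (n : nat).

Definition bra (c : 'I_n -> 'I_n -> 'I_n -> R) (x y : 'cV[R]_n) : 'cV[R]_n :=
  \col_k \sum_i \sum_j x i 0 * y j 0 * c i j k.

Definition bvec (a : 'I_n) : 'cV[R]_n := delta_mx a 0.

Definition ad (c : 'I_n -> 'I_n -> 'I_n -> R) (x : 'cV[R]_n) : 'M[R]_n :=
  \matrix_(k, j) \sum_i x i 0 * c i j k.

Definition ip (G : 'M[R]_n) (x y : 'cV[R]_n) : R := (x^T *m G *m y) 0 0.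

Definition is_inner_product (G : 'M[R]_n) : Prop :=
  G^T = G /\ forall x : 'cV[R]_n, x != 0 -> 0 < ip G x x.

Definition is_derivation (c : 'I_n -> 'I_n -> 'I_n -> R) (D : 'M[R]_n) : Prop :=
  forall x y : 'cV[R]_n, D *m bra c x y = bra c (D *m x) y + bra c x (D *m y).

(* Ricci form of the left-invariant metric defined by G (Besse, Einstein
   Manifolds, 7.38), written with respect to the (non-orthonormal) standard
   basis using the inverse Gram matrix Gi:
   ric(X,Y) = -1/2 sum_i <[X,f_i],[Y,f_i]> - 1/2 B(X,Y)
              + 1/4 sum_{i,j} <[f_i,f_j],X><[f_i,f_j],Y>
              - 1/2 (<[H,X],Y> + <[H,Y],X>),
   (f_i) orthonormal, B Killing form, <H,X> = tr ad_X. *)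
Definition ricci_form (c : 'I_n -> 'I_n -> 'I_n -> R) (G : 'M[R]_n)
    (X Y : 'cV[R]_n) : R :=
  let Gi := invmx G in
  let H := Gi *m (\col_a \tr (ad c (bvec a))) in
  - (1/2) * (\sum_a \sum_b Gi a b * ip G (bra c X (bvec a)) (bra c Y (bvec b)))
  - (1/2) * \tr (ad c X *m ad c Y)
  + (1/4) * (\sum_a \sum_b \sum_a' \sum_b'
       Gi a a' * Gi b b' * ip G (bra c (bvec a) (bvec b)) X
                         * ip G (bra c (bvec a') (bvec b')) Y)
  - (1/2) * (ip G (bra c H X) Y + ip G (bra c H Y) X).

(* Ricci operator: <Ric X, Y> = ric(X, Y) *)
Definition ricci_op (c : 'I_n -> 'I_n -> 'I_n -> R) (G : 'M[R]_n) : 'M[R]_n :=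
  invmx G *m \matrix_(i, j) ricci_form c G (bvec i) (bvec j).

Definition is_nilsoliton (c : 'I_n -> 'I_n -> 'I_n -> R) (G : 'M[R]_n) : Prop :=
  exists (cst : R) (D : 'M[R]_n),
    is_derivation c D /\ ricci_op c G = cst%:M + D.

Definition einstein_nilradical (c : 'I_n -> 'I_n -> 'I_n -> R) : Prop :=
  exists G : 'M[R]_n, is_inner_product G /\ is_nilsoliton c G.

End LieMetric.

(* structure constants of n_lambda; basis e_1..e_7 is indexed 0..6 *)
Definition nlam (R : realType) (l : R) (i j k : 'I_7) : R :=
  match nat_of_ord i, nat_of_ord j, nat_of_ord k with
  | 0, 1, 3 => 1 | 1, 0, 3 => -1
  | 0, 2, 4 => 1 | 2, 0, 4 => -1
  | 0, 5, 6 => 1 | 5, 0, 6 => -1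
  | 1, 2, 5 => 1 | 2, 1, 5 => -1
  | 1, 4, 6 => l | 4, 1, 6 => - l
  | 2, 3, 6 => l - 1 | 3, 2, 6 => 1 - l
  | _, _, _ => 0
  end.

(* Main.v *)
Require Import Defs.
From HB Require Import structures.
From mathcomp Require Import all_boot all_order all_algebra.
From mathcomp Require Import reals.
From mathcomp Require Import ring lra.
Set Implicit Arguments. Unset Strict Implicit. Unset Printing Implicit Defensive.
Import Order.TTheory GRing.Theory Num.Theory.
Local Open Scope ring_scope.


Section Gen.
Variables (R : realType) (n : nat).
Local Notation e := (bvec R).
Implicit Types (c : 'I_n -> 'I_n -> 'I_n -> R) (G E : 'M[R]_n).

Lemma bvecE (a i : 'I_n) : e a i 0 = (i == a)%:R.
Proof. by rewrite /bvec mxE eqxx andbT. Qed.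

Lemma sum_delta (a : 'I_n) (F : 'I_n -> R) : \sum_i (i == a)%:R * F i = F a.
Proof.
rewrite (bigD1 a) //= eqxx mul1r big1 ?addr0 // => i /negbTE ->; by rewrite mul0r.
Qed.

Lemma sum_deltar (a : 'I_n) (F : 'I_n -> R) : \sum_i F i * (i == a)%:R = F a.
Proof. rewrite -[RHS](sum_delta a); apply: eq_bigr => i _; by rewrite mulrC. Qed.

Lemma braE c x y k : bra c x y k 0 = \sum_i \sum_j x i 0 * y j 0 * c i j k.
Proof. by rewrite /bra mxE. Qed.

Lemma bra_bvec c a b k : bra c (e a) (e b) k 0 = c a b k.
Proof.
rewrite braE.
under eq_bigr do under eq_bigr do rewrite !bvecE -mulrA.
under eq_bigr do rewrite -big_distrr /=.
by rewrite sum_delta sum_delta.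
Qed.

Lemma bra0l c y : bra c 0 y = 0.
Proof.
apply/matrixP => k j; rewrite ord1 braE mxE big1 // => i _; rewrite big1 // => j' _.
by rewrite mxE !mul0r.
Qed.

Lemma ipE G x y : ip G x y = \sum_p \sum_q x p 0 * G p q * y q 0.
Proof.
rewrite /ip mxE exchange_big /=; apply: eq_bigr => q _.
rewrite mxE big_distrl /=; apply: eq_bigr => p _; by rewrite mxE.
Qed.

Lemma ip0l G y : ip G 0 y = 0.
Proof. by rewrite /ip trmx0 !mul0mx mxE. Qed.

Lemma tr_mulE (A B : 'M[R]_n) : \tr (A *m B) = \sum_i \sum_j A i j * B j i.
Proof. by rewrite /mxtrace; apply: eq_bigr => i _; rewrite mxE. Qed.

End Gen.

Section LDL.
Variable R : realType.

Definition qf n (A : 'M[R]_n) (x : 'cV[R]_n) := \sum_p \sum_q x p 0 * A p q * x q 0.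

Definition PDm n (A : 'M[R]_n) := A^T = A /\ forall x, x != 0 -> 0 < qf A x.

Lemma qf_split n (A : 'M[R]_n.+1) x : qf A x =
  x ord0 0 * A ord0 ord0 * x ord0 0
  + \sum_(j < n) x ord0 0 * A ord0 (lift ord0 j) * x (lift ord0 j) 0
  + \sum_(i < n) x (lift ord0 i) 0 * A (lift ord0 i) ord0 * x ord0 0
  + \sum_(i < n) \sum_(j < n) x (lift ord0 i) 0 * A (lift ord0 i) (lift ord0 j) * x (lift ord0 j) 0.
Proof.
rewrite /qf big_ord_recl big_ord_recl.
under [X in _ + X]eq_bigr do rewrite big_ord_recl.
rewrite big_split /= !addrA.
by [].
Qed.

Lemma sumI1 n (F : 'I_n.+1 -> R) : \sum_i F i = F ord0 + \sum_(i < n) F (lift ord0 i).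
Proof. by rewrite big_ord_recl. Qed.

Lemma diag_triple n (X D Z : 'M[R]_n) i j : (forall i j, i != j -> D i j = 0) ->
  (X^T *m D *m Z) i j = \sum_l X l i * D l l * Z l j.
Proof.
move=> hD; rewrite mxE; under eq_bigr do rewrite mxE big_distrl /=.
rewrite exchange_big /=; apply: eq_bigr => l _.
rewrite (bigD1 l) //= big1 ?addr0; first by rewrite mxE.
by move=> k hk; rewrite hD ?mulr0 ?mul0r // eq_sym.
Qed.

Lemma ldl n (A : 'M[R]_n) : PDm A ->
  exists P D : 'M[R]_n, [/\ P \in unitmx, (forall i j, i != j -> D i j = 0),
      (forall i, 0 < D i i) & A = P^T *m D *m P].
Proof.
elim: n A => [|n IH] A [hs hp].
  exists 1%:M, 1%:M; split.
  - by rewrite unitmx1.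
  - by move=> [].
  - by move=> [].
  - by apply/matrixP => [[]].
have Asym i j : A i j = A j i by rewrite -{1}hs mxE.
pose a := A ord0 ord0.
have ha : 0 < a.
  have := hp (bvec R ord0); rewrite /qf.
  under eq_bigr do under eq_bigr do rewrite !bvecE.
  under eq_bigr do rewrite sum_deltar.
  rewrite sum_delta; apply.
  apply/eqP => /matrixP /(_ ord0 0); rewrite bvecE !mxE eqxx => /eqP; by rewrite oner_eq0.
pose b j := A ord0 (lift ord0 j).
pose S := \matrix_(i, j) (A (lift ord0 i) (lift ord0 j) - a^-1 * b i * b j).
have hS : PDm S.
  split.
    apply/matrixP => i j; rewrite !mxE Asym; ring.
  move=> y hy.
  pose x : 'cV[R]_n.+1 := \col_i (match unlift ord0 i with
       | None => - (a^-1 * \sum_j b j * y j 0) | Some i' => y i' 0 end).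
  have hx : x != 0.
    apply: contra hy => /eqP hx; apply/eqP/matrixP => i j; rewrite ord1.
    have := congr1 (fun M : 'cV[R]_n.+1 => M (lift ord0 i) 0) hx; by rewrite !mxE liftK.
  suff <- : qf A x = qf S y by exact: hp x hx.
  set s := \sum_j b j * y j 0.
  have hx0 : x ord0 0 = - (a^-1 * s) by rewrite mxE unlift_none.
  have hxl j : x (lift ord0 j) 0 = y j 0 by rewrite mxE liftK.
  rewrite qf_split hx0.
  under eq_bigr do rewrite hxl.
  under [in X in _ + X + _ = _]eq_bigr do rewrite hxl.
  under [in X in _ + X = _]eq_bigr do (rewrite hxl; under eq_bigr do rewrite hxl).
  have -> : \sum_(i < n) (- (a^-1 * s) * A ord0 (lift ord0 i) * y i 0) = - (a^-1 * s) * s.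
    under eq_bigr do rewrite -mulrA; rewrite -mulr_sumr; congr (_ * _).
  have -> : \sum_(i < n) (y i 0 * A (lift ord0 i) ord0 * - (a^-1 * s)) = s * - (a^-1 * s).
    rewrite -mulr_suml; congr (_ * _).
    rewrite /s; apply: eq_bigr => i _; rewrite /b Asym; ring.
  have -> : \sum_(i < n) \sum_(j < n) y i 0 * A (lift ord0 i) (lift ord0 j) * y j 0
     = \sum_i \sum_j y i 0 * S i j * y j 0 + a^-1 * s * s.
    have -> : a^-1 * s * s = \sum_i \sum_j y i 0 * (a^-1 * b i * b j) * y j 0.
      rewrite -mulrA /s big_distrlr /= mulr_sumr; apply: eq_bigr => i _.
      rewrite mulr_sumr; apply: eq_bigr => j _; ring.
    rewrite -big_split /=; apply: eq_bigr => i _.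
    rewrite -big_split /=; apply: eq_bigr => j _; rewrite mxE; ring.
  rewrite /qf /a; field; by rewrite gt_eqF.
have [Q [D' [hQ hD'0 hD'p hSe]]] := IH S hS.
pose P : 'M[R]_n.+1 := \matrix_(i, j) match unlift ord0 i, unlift ord0 j with
   | None, None => 1 | None, Some j' => a^-1 * b j' | Some _, None => 0
   | Some i', Some j' => Q i' j' end.
pose D : 'M[R]_n.+1 := \matrix_(i, j) match unlift ord0 i, unlift ord0 j with
   | None, None => a | Some i', Some j' => D' i' j' | _, _ => 0 end.
have hDoff : forall i j, i != j -> D i j = 0.
  move=> i j; rewrite mxE.
  case: (unliftP ord0 i) => [i'|] ->; case: (unliftP ord0 j) => [j'|] -> //=;
    rewrite ?liftK ?unlift_none //.
  by move=> h; apply: hD'0; apply: contra h => /eqP ->.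
exists P, D; split => //.
- rewrite unitmxE (expand_det_col _ ord0) big_ord_recl big1 /=; last first.
    by move=> i _; rewrite /cofactor mxE liftK unlift_none mul0r.
  rewrite addr0 /cofactor mxE unlift_none mul1r expr0 mul1r.
  have -> : row' ord0 (col' ord0 P) = Q.
    by apply/matrixP => i j; rewrite !mxE !liftK.
  by rewrite -unitmxE.
- by move=> i; rewrite mxE; case: (unliftP ord0 i) => [i'|] _.
- apply/matrixP => i j.
  rewrite diag_triple // sumI1.
  case: (unliftP ord0 i) => [i'|] ->; case: (unliftP ord0 j) => [j'|] ->;
  rewrite !mxE ?liftK ?unlift_none /=;
  under eq_bigr do rewrite !mxE !liftK ?unlift_none /=.
  + have := congr1 (fun M : 'M[R]_n => M i' j') hSe; rewrite diag_triple // mxE => <-.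
    rewrite /b; field; by rewrite gt_eqF.
  + rewrite big1; last by move=> k _; rewrite mulr0.
    rewrite /b Asym; field; by rewrite gt_eqF.
  + rewrite big1; last by move=> k _; rewrite !mul0r.
    rewrite /b; field; by rewrite gt_eqF.
  + rewrite big1; last by move=> k _; rewrite !mul0r.
    by rewrite /a mulr1 mul1r addr0.
Qed.

Lemma sum4E n (F : 'I_n -> 'I_n -> 'I_n -> 'I_n -> R) :
  \sum_a \sum_b \sum_c \sum_d F a b c d =
  \sum_(t : 'I_n * 'I_n * 'I_n * 'I_n) F t.1.1.1 t.1.1.2 t.1.2 t.2.
Proof. by rewrite !pair_big /=. Qed.

Lemma tr4 n (A U : 'M[R]_n) : A^T = A ->
  \sum_a \sum_b \sum_a' \sum_b' A a a' * A b b' * U a b * U a' b'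
  = \tr (A *m U *m A *m U^T).
Proof.
move=> hs; have Asym i j : A i j = A j i by rewrite -{1}hs mxE.
have -> : \tr (A *m U *m A *m U^T) =
   \sum_x \sum_y \sum_w \sum_z A x z * U z w * A w y * U x y.
  rewrite /mxtrace; apply: eq_bigr => x _; rewrite mxE; apply: eq_bigr => y _.
  rewrite [U^T y x]mxE [(A *m U *m A) x y]mxE big_distrl /=; apply: eq_bigr => w _.
  rewrite [(A *m U) x w]mxE !big_distrl /=; apply: eq_bigr => z _; ring.
rewrite !sum4E.
pose h (t : 'I_n * 'I_n * 'I_n * 'I_n) := let: (x, y, w, z) := t in (z, w, x, y).
have hi : injective h by move=> [[[a b] c] d] [[[a2 b2] c2] d2] /= [] -> -> -> ->.
rewrite (reindex_inj hi); apply: eq_bigr => [[[[x y] w] z]] _ /=.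
rewrite (Asym z x); ring.
Qed.

Lemma trpos n (A U : 'M[R]_n) : PDm A ->
  \sum_a \sum_b \sum_a' \sum_b' A a a' * A b b' * U a b * U a' b' = 0 -> U = 0.
Proof.
move=> hA; have [P [D [hP hD0 hDp hAe]]] := ldl hA.
rewrite tr4; last by case: hA.
pose W := P *m U *m P^T.
have -> : \tr (A *m U *m A *m U^T) = \tr (D *m W *m D *m W^T).
  rewrite hAe /W !trmx_mul !trmxK.
  by rewrite -!mulmxA mxtrace_mulC !mulmxA.
have -> : \tr (D *m W *m D *m W^T) = \sum_i \sum_j D i i * D j j * W i j ^+ 2.
  have hDW i k : (D *m W) i k = D i i * W i k.
    rewrite mxE (bigD1 i) //= big1 ?addr0 // => m hm; by rewrite hD0 ?mul0r // eq_sym.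
  have hWD i j : (D *m W *m D) i j = D i i * W i j * D j j.
    rewrite mxE (bigD1 j) //= big1 ?addr0 ?hDW //.
    by move=> m hm; rewrite hD0 ?mulr0.
  rewrite /mxtrace; apply: eq_bigr => i _; rewrite mxE; apply: eq_bigr => j _.
  rewrite hWD [W^T j i]mxE; ring.
move/eqP; rewrite psumr_eq0; last first.
  move=> i _; apply: sumr_ge0 => j _; apply: mulr_ge0; last exact: sqr_ge0.
  by apply: mulr_ge0; apply: ltW.
move/allP => hall.
have hW : W = 0.
  apply/matrixP => i j; rewrite [(0 : 'M[R]_n) i j]mxE.
  have := hall i (mem_index_enum i).
  rewrite psumr_eq0; last first.
    move=> k _; apply: mulr_ge0; last exact: sqr_ge0.
    by apply: mulr_ge0; apply: ltW.
  move/allP/(_ j (mem_index_enum j)) => /eqP.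
  move/eqP; rewrite !mulf_eq0 (gt_eqF (hDp i)) (gt_eqF (hDp j)) /= orbb => /eqP; done.
have : invmx P *m W *m invmx P^T = U.
  rewrite /W !mulmxA mulVmx // mul1mx -mulmxA mulmxV ?mulmx1 //.
  by rewrite unitmx_tr.
by rewrite hW mulmx0 mul0mx.
Qed.
End LDL.


Section S6.
Variables (R : comNzRingType) (I : finType).
Lemma sum6E (F : I -> I -> I -> I -> I -> I -> R) :
  \sum_a \sum_b \sum_c \sum_d \sum_e \sum_f F a b c d e f =
  \sum_(t : I * I * I * I * I * I) F t.1.1.1.1.1 t.1.1.1.1.2 t.1.1.1.2 t.1.1.2 t.1.2 t.2.
Proof. by rewrite !pair_big /=. Qed.
End S6.

Section Trace.
Variables (R : realType) (n : nat) (c : 'I_n -> 'I_n -> 'I_n -> R) (G E : 'M[R]_n).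
Hypotheses (hanti : forall a b k, c b a k = - c a b k) (hG : G^T = G)
  (hGu : G \in unitmx)
  (hK : forall X Y, \tr (ad c X *m ad c Y) = 0)
  (hH : forall a, \tr (ad c (bvec R a)) = 0).
Local Notation e := (bvec R).
Local Notation Gi := (invmx G).

Lemma Gsym p q : G p q = G q p.
Proof. by rewrite -{1}hG mxE. Qed.

Lemma Gisym p q : Gi p q = Gi q p.
Proof. have h := trmx_inv G; rewrite hG in h; by rewrite -{1}h mxE. Qed.

Definition T1 X Y := \sum_a \sum_b Gi a b * ip G (bra c X (e a)) (bra c Y (e b)).
Definition T3 X Y := \sum_a \sum_b \sum_a' \sum_b'
       Gi a a' * Gi b b' * ip G (bra c (e a) (e b)) X
                         * ip G (bra c (e a') (e b')) Y.

Lemma ricci_formE X Y : ricci_form c G X Y = - (1/2) * T1 X Y + (1/4) * T3 X Y.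
Proof.
have H0 : invmx G *m (\col_a \tr (ad c (e a))) = 0.
  have -> : (\col_a \tr (ad c (e a))) = 0 :> 'cV[R]_n.
    by apply/matrixP => i j; rewrite !mxE hH.
  by rewrite mulmx0.
rewrite /ricci_form /= H0 !bra0l !ip0l hK /T1 /T3; ring.
Qed.

Fact L_key : unit. Proof. exact: tt. Qed.
Definition L a b q := locked_with L_key (\sum_p c a b p * G p q).
Lemma LE a b q : L a b q = \sum_p c a b p * G p q.
Proof. by rewrite /L unlock. Qed.

Lemma Lanti a b q : L b a q = - L a b q.
Proof. rewrite !LE -sumrN; apply: eq_bigr => p _; by rewrite hanti mulNr. Qed.

Lemma T1_bvec k j : T1 (e k) (e j) = \sum_a \sum_b Gi a b * \sum_p c k a p * L j b p.
Proof.
apply: eq_bigr => a _; apply: eq_bigr => b _; congr (_ * _).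
rewrite ipE; apply: eq_bigr => p _; rewrite LE mulr_sumr; apply: eq_bigr => q _.
rewrite !bra_bvec Gsym; ring.
Qed.

Lemma ipL a b k : ip G (bra c (e a) (e b)) (e k) = L a b k.
Proof.
rewrite ipE LE; apply: eq_bigr => p _.
under eq_bigr do rewrite bvecE.
by rewrite sum_deltar bra_bvec.
Qed.

Lemma T3_bvec k j : T3 (e k) (e j) = \sum_a \sum_b \sum_a' \sum_b'
   Gi a a' * Gi b b' * L a b k * L a' b' j.
Proof.
apply: eq_bigr => a _; apply: eq_bigr => b _; apply: eq_bigr => a' _;
apply: eq_bigr => b' _; by rewrite !ipL.
Qed.

Lemma swapL x y z w : \sum_j c x y j * L z w j = \sum_j c z w j * L x y j.
Proof.
under eq_bigr do rewrite LE mulr_sumr.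
under [RHS]eq_bigr do rewrite LE mulr_sumr.
rewrite exchange_big /=; apply: eq_bigr => j _; apply: eq_bigr => p _.
rewrite Gsym; ring.
Qed.


Hypothesis hder : forall a b m,
  \sum_p E m p * c a b p = \sum_r E r a * c r b m + \sum_r E r b * c a r m.

Local Notation F := (E *m invmx G).

Lemma contr a b j : \sum_k L a b k * F j k = \sum_p E j p * c a b p.
Proof.
under eq_bigr do rewrite LE mulr_suml.
rewrite exchange_big /=; apply: eq_bigr => p _.
have h : (F *m G) j p = E j p by rewrite -mulmxA mulVmx ?mulmx1.
rewrite -h mxE mulr_suml; apply: eq_bigr => k _; rewrite Gsym; ring.
Qed.

Definition Q1 := \sum_a \sum_b \sum_a' \sum_b' \sum_j \sum_r
   Gi a a' * Gi b b' * L a' b' j * (E r a * c r b j).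
Definition Q2 := \sum_a \sum_b \sum_a' \sum_b' \sum_j \sum_r
   Gi a a' * Gi b b' * L a' b' j * (E r b * c a r j).

Lemma Q2Q1 : Q2 = Q1.
Proof.
rewrite /Q1 /Q2 !sum6E.
pose h (t : 'I_n * 'I_n * 'I_n * 'I_n * 'I_n * 'I_n) :=
  let: (a, b, a', b', j, r) := t in (b, a, b', a', j, r).
have hi : injective h.
  by move=> [[[[[a b] a'] b'] j] r] [[[[[a2 b2] a2'] b2'] j2] r2] /= [] -> -> -> -> -> ->.
rewrite (reindex_inj hi); apply: eq_bigr => [[[[[[a b] a'] b'] j] r]] _ /=.
rewrite hanti Lanti; ring.
Qed.

Lemma QQE : \sum_k \sum_j T3 (e k) (e j) * F j k = Q1 + Q2.
Proof.
have -> : \sum_k \sum_j T3 (e k) (e j) * F j k =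
   \sum_k \sum_j \sum_a \sum_b \sum_a' \sum_b'
       Gi a a' * Gi b b' * L a b k * L a' b' j * F j k.
  apply: eq_bigr => k _; apply: eq_bigr => j _; rewrite T3_bvec.
  rewrite big_distrl; apply: eq_bigr => a _; rewrite big_distrl; apply: eq_bigr => b _.
  rewrite big_distrl; apply: eq_bigr => a' _; rewrite big_distrl; by apply: eq_bigr.
have -> : \sum_k \sum_j \sum_a \sum_b \sum_a' \sum_b'
       Gi a a' * Gi b b' * L a b k * L a' b' j * F j k =
    \sum_a \sum_b \sum_a' \sum_b' \sum_j \sum_k
       Gi a a' * Gi b b' * L a b k * L a' b' j * F j k.
  rewrite !sum6E.
  pose h (t : 'I_n * 'I_n * 'I_n * 'I_n * 'I_n * 'I_n) :=
    let: (a, b, a', b', j, k) := t in (k, j, a, b, a', b').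
  have hi : injective h.
    by move=> [[[[[a b] a'] b'] j] r] [[[[[a2 b2] a2'] b2'] j2] r2] /= [] -> -> -> -> -> ->.
  rewrite (reindex_inj hi); by apply: eq_bigr => [[[[[[a b] a'] b'] j] k]] _ /=.
rewrite /Q1 /Q2 -!big_split /=; apply: eq_bigr => a _.
rewrite -!big_split /=; apply: eq_bigr => b _.
rewrite -!big_split /=; apply: eq_bigr => a' _.
rewrite -!big_split /=; apply: eq_bigr => b' _.
rewrite -!big_split /=; apply: eq_bigr => j _.
have -> : \sum_k Gi a a' * Gi b b' * L a b k * L a' b' j * F j k =
   Gi a a' * Gi b b' * L a' b' j * \sum_k L a b k * F j k.
  rewrite mulr_sumr; apply: eq_bigr => k _; ring.
rewrite contr hder mulrDr !mulr_sumr -big_split /=; by apply: eq_bigr.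
Qed.

Lemma PPE : \sum_k \sum_j T1 (e k) (e j) * F j k = Q1.
Proof.
have -> : \sum_k \sum_j T1 (e k) (e j) * F j k =
   \sum_k \sum_j \sum_a \sum_b \sum_p \sum_i
       Gi a b * c j b p * L k a p * E j i * Gi i k.
  apply: eq_bigr => k _; apply: eq_bigr => j _; rewrite T1_bvec.
  rewrite big_distrl; apply: eq_bigr => a _; rewrite big_distrl; apply: eq_bigr => b _.
  rewrite swapL mulr_sumr big_distrl; apply: eq_bigr => p _.
  rewrite [F j k]mxE big_distrr /=; apply: eq_bigr => i _; ring.
rewrite /Q1 !sum6E.
pose h (t : 'I_n * 'I_n * 'I_n * 'I_n * 'I_n * 'I_n) :=
  let: (a, b, a', b', j, r) := t in (a', r, b', b, j, a).
have hi : injective h.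
  by move=> [[[[[a b] a'] b'] j] r] [[[[[a2 b2] a2'] b2'] j2] r2] /= [] -> -> -> -> -> ->.
rewrite (reindex_inj hi); apply: eq_bigr => [[[[[[a b] a'] b'] j] r]] _ /=.
rewrite (Gisym b' b) (Gisym a a'); ring.
Qed.

Lemma trace_ric : \tr (ricci_op c G *m E) = 0.
Proof.
rewrite /ricci_op -mulmxA mxtrace_mulC -mulmxA tr_mulE.
have -> : \sum_i \sum_j (\matrix_(i0, j0) ricci_form c G (e i0) (e j0)) i j * F j i
  = - (1/2) * (\sum_k \sum_j T1 (e k) (e j) * F j k)
    + (1/4) * (\sum_k \sum_j T3 (e k) (e j) * F j k).
  rewrite !mulr_sumr -big_split /=; apply: eq_bigr => k _.
  rewrite !mulr_sumr -big_split /=; apply: eq_bigr => j _.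
  rewrite mxE ricci_formE; ring.
rewrite PPE QQE Q2Q1; by field.
Qed.

End Trace.


Section G.
Variables (R : realType) (n : nat).
Local Notation e := (bvec R).
Implicit Types (c : 'I_n -> 'I_n -> 'I_n -> R) (G D : 'M[R]_n).

Lemma mul_bvec D a i : (D *m e a) i 0 = D i a.
Proof. rewrite mxE; under eq_bigr do rewrite bvecE; by rewrite sum_deltar. Qed.

Lemma der_coord c D : is_derivation c D -> forall a b m,
  \sum_p D m p * c a b p = \sum_r D r a * c r b m + \sum_r D r b * c a r m.
Proof.
move=> hD a b m; have := congr1 (fun M : 'cV[R]_n => M m 0) (hD (e a) (e b)).
rewrite mxE [in X in _ = X -> _]mxE !braE.
under eq_bigr do rewrite bra_bvec.
move=> ->; congr (_ + _).
  apply: eq_bigr => r _; rewrite mul_bvec.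
  under eq_bigr do rewrite bvecE (mulrC (D r a)) -mulrA.
  by rewrite sum_delta.
rewrite exchange_big /=; apply: eq_bigr => r _; rewrite mul_bvec.
under eq_bigr do rewrite bvecE mulrAC -mulrA.
by rewrite sum_delta mulrC.
Qed.

Lemma diag_der c (t : 'I_n -> R) :
  (forall i j k, c i j k * (t k - t i - t j) = 0) ->
  is_derivation c (diag_mx (\row_k t k)).
Proof.
move=> ht x y; apply/matrixP => k j; rewrite ord1.
rewrite mul_diag_mx !mxE mulr_sumr -big_split /=; apply: eq_bigr => i _.
rewrite mulr_sumr -big_split /=; apply: eq_bigr => j' _.
rewrite !mul_diag_mx !mxE.
apply/eqP; rewrite -subr_eq0.
have -> : t k * (x i 0 * y j' 0 * c i j' k) -
    (t i * x i 0 * y j' 0 * c i j' k + x i 0 * (t j' * y j' 0) * c i j' k)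
  = x i 0 * y j' 0 * (c i j' k * (t k - t i - t j')) by ring.
by rewrite ht mulr0.
Qed.

Lemma tr_diag (A : 'M[R]_n) (t : 'I_n -> R) :
  \tr (A *m diag_mx (\row_k t k)) = \sum_k A k k * t k.
Proof. rewrite mul_mx_diag /mxtrace; apply: eq_bigr => k _; by rewrite !mxE. Qed.

Lemma ip_pos G x : is_inner_product G -> x != 0 -> 0 < ip G x x.
Proof. by case=> _ h /h. Qed.

Lemma PD_unit G : is_inner_product G -> G \in unitmx.
Proof.
move=> hG; apply/negPn/negP => hnu.
have hK : kermx G != 0 by rewrite kermx_eq0 row_free_unit.
have [i hi] : exists i, row i (kermx G) != 0.
  apply/existsP; move: hK; apply: contraR; rewrite negb_exists => /forallP h.
  apply/eqP/row_matrixP => i; rewrite row0; exact/eqP/negPn.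
have hu : row i (kermx G) *m G = 0 by rewrite -row_mul mulmx_ker row0.
have := ip_pos hG (x := (row i (kermx G))^T); rewrite trmx_eq0 => /(_ hi).
by rewrite /ip trmxK hu mul0mx mxE ltxx.
Qed.

Lemma ip0r G x : ip G x 0 = 0.
Proof. by rewrite /ip mulmx0 mxE. Qed.

Lemma PD_inv G : is_inner_product G -> PDm (invmx G).
Proof.
move=> hG; have hu := PD_unit hG; have [hs _] := hG.
have hGi : (invmx G)^T = invmx G by rewrite trmx_inv hs.
split => // x hx.
have hy : invmx G *m x != 0.
  apply: contra hx => /eqP h; by rewrite -[x]mul1mx -(mulmxV hu) -mulmxA h mulmx0.
have := ip_pos hG hy.
have -> : qf (invmx G) x = ip (invmx G) x x by rewrite ipE.
suff -> : ip G (invmx G *m x) (invmx G *m x) = ip (invmx G) x x by [].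
rewrite /ip trmx_mul hGi -!mulmxA (mulmxA G) mulmxV // mul1mx.
by [].
Qed.


Lemma central_contra c G (z : 'cV[R]_n) :
  is_inner_product G ->
  (forall X Y, \tr (ad c X *m ad c Y) = 0) -> (forall a, \tr (ad c (e a)) = 0) ->
  z != 0 ->
  (forall j, z j 0 != 0 -> forall b, bra c (e j) (e b) = 0) ->
  ((forall a b, \sum_i L c G a b i * z i 0 = 0) -> z = 0) ->
  ricci_op c G *m z = 0 -> False.
Proof.
move=> hG hK hH hz hzc hzd hR.
have hu := PD_unit hG.
pose Mx := \matrix_(i, j) ricci_form c G (e i) (e j).
have hMz : Mx *m z = 0.
  have : G *m (ricci_op c G *m z) = 0 by rewrite hR mulmx0.
  by rewrite /ricci_op !mulmxA mulmxV // mul1mx.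
have h2 : \sum_i \sum_j z i 0 * Mx i j * z j 0 = 0.
  rewrite big1 // => i _.
  have := congr1 (fun M : 'cV[R]_n => M i 0) hMz; rewrite [(Mx *m z) i 0]mxE [(0 : 'cV[R]_n) i 0]mxE => h.
  transitivity (z i 0 * \sum_j Mx i j * z j 0); last by rewrite h mulr0.
  rewrite mulr_sumr; apply: eq_bigr => j _; ring.
have h3 : \sum_i \sum_j z i 0 * Mx i j * z j 0 =
    (1/4) * \sum_i \sum_j z i 0 * z j 0 * T3 c G (e i) (e j).
  rewrite mulr_sumr; apply: eq_bigr => i _; rewrite mulr_sumr; apply: eq_bigr => j _.
  have [hj|hj] := eqVneq (z j 0) 0; first by rewrite hj !(mulr0, mul0r).
  rewrite mxE (ricci_formE G hK hH).
  have -> : T1 c G (e i) (e j) = 0.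
    rewrite /T1 big1 // => a _; rewrite big1 // => b _; by rewrite (hzc j hj) ip0r mulr0.
  ring.
pose u := \matrix_(a, b) \sum_i L c G a b i * z i 0.
have h4 : \sum_i \sum_j z i 0 * z j 0 * T3 c G (e i) (e j) =
   \sum_a \sum_b \sum_a' \sum_b' invmx G a a' * invmx G b b' * u a b * u a' b'.
  have -> : \sum_i \sum_j z i 0 * z j 0 * T3 c G (e i) (e j) =
    \sum_i \sum_j \sum_a \sum_b \sum_a' \sum_b'
      invmx G a a' * invmx G b b' * (L c G a b i * z i 0) * (L c G a' b' j * z j 0).
    apply: eq_bigr => i _; apply: eq_bigr => j _; rewrite T3_bvec.
    rewrite mulr_sumr; apply: eq_bigr => a _; rewrite mulr_sumr; apply: eq_bigr => b _.
    rewrite mulr_sumr; apply: eq_bigr => a' _; rewrite mulr_sumr; apply: eq_bigr => b' _.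
    ring.
  have -> : \sum_i \sum_j \sum_a \sum_b \sum_a' \sum_b'
      invmx G a a' * invmx G b b' * (L c G a b i * z i 0) * (L c G a' b' j * z j 0) =
    \sum_a \sum_b \sum_a' \sum_b' \sum_i \sum_j
      invmx G a a' * invmx G b b' * (L c G a b i * z i 0) * (L c G a' b' j * z j 0).
    rewrite !sum6E.
    pose h (t : 'I_n * 'I_n * 'I_n * 'I_n * 'I_n * 'I_n) :=
      let: (a, b, a', b', i, j) := t in (i, j, a, b, a', b').
    have hi : injective h.
      by move=> [[[[[a b] a'] b'] j] r] [[[[[a2 b2] a2'] b2'] j2] r2] /= [] -> -> -> -> -> ->.
    rewrite (reindex_inj hi); by apply: eq_bigr => [[[[[[a b] a'] b'] i] j]] _ /=.
  apply: eq_bigr => a _; apply: eq_bigr => b _; apply: eq_bigr => a' _; apply: eq_bigr => b' _.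
  rewrite !mxE -mulrA big_distrlr /= mulr_sumr; apply: eq_bigr => i _.
  rewrite mulr_sumr; apply: eq_bigr => j _; ring.
have hu0 : u = 0.
  apply: (trpos (PD_inv hG)); rewrite -h4.
  have := h2; rewrite h3 => /eqP; rewrite mulf_eq0 => /orP [|/eqP //].
  by rewrite div1r invr_eq0 pnatr_eq0.
move/eqP: hz; apply; apply: hzd => a b.
have := congr1 (fun M : 'M[R]_n => M a b) hu0; by rewrite !mxE.
Qed.

End G.


Section Conc.
Variable R : realType.
Variable l : R.
Local Notation c := (nlam l).

Lemma nlam_anti a b k : c b a k = - c a b k.
Proof.
case: a => [[|[|[|[|[|[|[|a]]]]]]] ha] //; case: b => [[|[|[|[|[|[|[|b]]]]]]] hb] //;
case: k => [[|[|[|[|[|[|[|k]]]]]]] hk] //; rewrite /nlam /=; ring.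
Qed.

Lemma nlam_grad (i j k : 'I_7) : (k <= j)%N -> c i j k = 0.
Proof.
case: i => [[|[|[|[|[|[|[|i]]]]]]] hi] //; case: j => [[|[|[|[|[|[|[|j]]]]]]] hj] //;
case: k => [[|[|[|[|[|[|[|k]]]]]]] hk] //.
Qed.

Lemma nlam_killing (X Y : 'cV[R]_7) : \tr (ad c X *m ad c Y) = 0.
Proof.
rewrite tr_mulE big1 // => k _; rewrite big1 // => j _; rewrite !mxE.
case: (leqP k j) => h.
  by rewrite big1 ?mul0r // => i _; rewrite nlam_grad ?mulr0.
by rewrite [X in _ * X]big1 ?mulr0 // => i _; rewrite nlam_grad ?mulr0 // ltnW.
Qed.

Lemma nlam_trad a : \tr (ad c (bvec R a)) = 0.
Proof.
rewrite /mxtrace big1 // => j _; rewrite mxE big1 // => i _; by rewrite nlam_grad ?mulr0.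
Qed.

Definition tw (x y z : R) (k : 'I_7) : R :=
  match nat_of_ord k with
  | 0 => x | 1 => y | 2 => z | 3 => x + y | 4 => x + z | 5 => y + z | _ => x + y + z end.

Lemma nlam_tw x y z i j k : c i j k * (tw x y z k - tw x y z i - tw x y z j) = 0.
Proof.
case: i => [[|[|[|[|[|[|[|i]]]]]]] hi] //; case: j => [[|[|[|[|[|[|[|j]]]]]]] hj] //;
case: k => [[|[|[|[|[|[|[|k]]]]]]] hk] //; rewrite /nlam /tw /=; ring.
Qed.

End Conc.


Section G2.
Variables (R : realType) (n : nat).
Local Notation e := (bvec R).
Implicit Types (c : 'I_n -> 'I_n -> 'I_n -> R).

Lemma diag_sumr (d : 'rV[R]_n) a (F : 'I_n -> R) :
  \sum_b diag_mx d a b * F b = d 0 a * F a.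
Proof.
rewrite (bigD1 a) //= big1 ?addr0; first by rewrite mxE eqxx mulr1n.
by move=> b hb; rewrite mxE eq_sym (negbTE hb) mulr0n mul0r.
Qed.

Lemma diag_suml (d : 'rV[R]_n) b (F : 'I_n -> R) :
  \sum_a F a * diag_mx d a b = F b * d 0 b.
Proof.
rewrite (bigD1 b) //= big1 ?addr0; first by rewrite mxE eqxx mulr1n.
by move=> a ha; rewrite mxE (negbTE ha) mulr0n mulr0.
Qed.

Lemma sum2_diag (d : 'rV[R]_n) a b (F : 'I_n -> 'I_n -> R) :
  \sum_a' \sum_b' diag_mx d a a' * diag_mx d b b' * F a' b' = d 0 a * d 0 b * F a b.
Proof.
under eq_bigr do (under eq_bigr do rewrite -mulrA; rewrite -mulr_sumr diag_sumr).
rewrite diag_sumr; ring.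
Qed.

Variable g : 'I_n -> R.
Hypothesis hg : forall k, g k != 0.
Local Notation Gd := (diag_mx (\row_k g k)).

Lemma inv_diag : invmx Gd = diag_mx (\row_k (g k)^-1).
Proof.
have h : Gd *m diag_mx (\row_k (g k)^-1) = 1%:M.
  rewrite mulmx_diag -diag_const_mx; congr diag_mx; apply/rowP => k; rewrite !mxE.
  by rewrite mulfV.
have [hu _] := mulmx1_unit h.
by rewrite -[RHS]mul1mx -(mulVmx hu) -mulmxA h mulmx1.
Qed.

Lemma L_diag c a b q : L c Gd a b q = c a b q * g q.
Proof. by rewrite LE diag_suml mxE. Qed.

Lemma T1_diag c i j : T1 c Gd (e i) (e j) =
  \sum_a \sum_p c i a p * c j a p * g p / g a.
Proof.
rewrite (T1_bvec _ (tr_diag_mx _)) inv_diag.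
apply: eq_bigr => a _; rewrite diag_sumr mxE mulr_sumr; apply: eq_bigr => p _.
rewrite L_diag; ring.
Qed.

Lemma T3_diag c i j : T3 c Gd (e i) (e j) =
  \sum_a \sum_b c a b i * c a b j * g i * g j / (g a * g b).
Proof.
rewrite T3_bvec inv_diag; apply: eq_bigr => a _; apply: eq_bigr => b _.
under eq_bigr do under eq_bigr do rewrite -mulrA.
rewrite (sum2_diag _ _ _ (fun a' b' => L c Gd a b i * L c Gd a' b' j)) !mxE !L_diag.
rewrite invfM; ring.
Qed.

End G2.


Notation o0 := (@Ordinal 7 0 erefl).
Notation o1 := (@Ordinal 7 1 erefl).
Notation o2 := (@Ordinal 7 2 erefl).
Notation o3 := (@Ordinal 7 3 erefl).
Notation o4 := (@Ordinal 7 4 erefl).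
Notation o5 := (@Ordinal 7 5 erefl).
Notation o6 := (@Ordinal 7 6 erefl).

Lemma sum7 (R : nmodType) (F : 'I_7 -> R) :
  \sum_i F i = F o0 + F o1 + F o2 + F o3 + F o4 + F o5 + F o6.
Proof.
rewrite !big_ord_recl big_ord0 addr0 !addrA.
by repeat congr (_ + _); congr F; apply: val_inj.
Qed.

Lemma ord7_cases (k : 'I_7) :
  k = o0 \/ k = o1 \/ k = o2 \/ k = o3 \/ k = o4 \/ k = o5 \/ k = o6.
Proof.
case: k => [[|[|[|[|[|[|[|k]]]]]]] hk] //;
  [left|right;left|do 2 right;left|do 3 right;left|do 4 right;left|do 5 right;left|do 6 right];
  exact: val_inj.
Qed.

Section NotE.
Variable R : realType.

Lemma not_einstein (l : R) : l = 0 \/ l = 1 -> ~ einstein_nilradical (nlam l).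
Proof.
move=> hl [G [hG [cst [D [hD hRic]]]]].
have hGu := PD_unit hG.
have hs : G^T = G by case: hG.
have hder := der_coord hD.
have htr x y z : \sum_k (cst%:M + D) k k * tw x y z k = 0.
  rewrite -tr_diag -hRic.
  exact: (trace_ric (@nlam_anti R l) hs hGu (@nlam_killing R l) (@nlam_trad R l)
           (der_coord (diag_der (@nlam_tw R l x y z)))).
have t1 := htr 1 0 0; have t2 := htr 0 1 0; have t3 := htr 0 0 1.
rewrite sum7 !mxE /tw /= !mulr1n in t1.
rewrite sum7 !mxE /tw /= !mulr1n in t2.
rewrite sum7 !mxE /tw /= !mulr1n in t3.
have d1 := hder o0 o1 o3; have d2 := hder o0 o2 o4; have d3 := hder o1 o2 o5;
have d4 := hder o0 o5 o6.
rewrite !sum7 /nlam /= in d1 d2 d3 d4.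
rewrite !(mulr0, mulr1, addr0, add0r) in d1 d2 d3 d4.
have hd0 : D o0 o0 = - cst / 2 by clear -t1 t2 t3 d1 d2 d3 d4; lra.
have hd1 : D o1 o1 = - cst / 2 by clear -t1 t2 t3 d1 d2 d3 d4; lra.
have hd2 : D o2 o2 = - cst / 2 by clear -t1 t2 t3 d1 d2 d3 d4; lra.
have hd3 : D o3 o3 = - cst by clear -d1 hd0 hd1; lra.
have hd4 : D o4 o4 = - cst by clear -d2 hd0 hd2; lra.
have hd6 : D o6 o6 = - (3 / 2) * cst by clear -d3 d4 hd0 hd1 hd2; lra.
clear t1 t2 t3 d1 d2 d3 d4.
have k1 := hder o6 o1 o3; have k2 := hder o6 o0 o3; have k3 := hder o6 o0 o4;
have k4 := hder o6 o0 o6; have k5 := hder o0 o5 o3; have k6 := hder o1 o2 o1;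
have k7 := hder o0 o5 o4; have k8 := hder o1 o2 o2; have k9 := hder o0 o5 o5;
rewrite !sum7 /nlam /= in k1 k2 k3 k4 k5 k6 k7 k8 k9.
rewrite !(mulr0, mulr1, addr0, add0r) in k1 k2 k3 k4 k5 k6 k7 k8 k9.
have D06 : D o0 o6 = 0 by clear -k1; lra.
have D16 : D o1 o6 = 0 by clear -k2; lra.
have D26 : D o2 o6 = 0 by clear -k3; lra.
have D36 : D o3 o6 = 0 by clear -k5 k6; lra.
have D46 : D o4 o6 = 0 by clear -k7 k8; lra.
have D56 : D o5 o6 = 0 by clear -k4; lra.
clear k1 k2 k3 k4 k5 k6 k7 k8 k9.
case: hl => hl; subst l.
- have c1 := hder o4 o1 o3; have c2 := hder o4 o0 o3; have c3 := hder o4 o0 o4;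
  have c4 := hder o4 o2 o6; have c5 := hder o4 o0 o6.
  rewrite !sum7 /nlam /= in c1 c2 c3 c4 c5.
  rewrite !(mulr0, mulr1, addr0, add0r, oppr0, subr0, sub0r) in c1 c2 c3 c4 c5.
  have D04 : D o0 o4 = 0 by clear -c1; lra.
  have D14 : D o1 o4 = 0 by clear -c2; lra.
  have D24 : D o2 o4 = 0 by clear -c3; lra.
  have D34 : D o3 o4 = 0 by clear -c4; lra.
  have D54 : D o5 o4 = 0 by clear -c5; lra.
  clear c1 c2 c3 c4 c5.
  pose al := cst / 2; pose be := if cst == 0 then 1 else D o6 o4.
  pose z : 'cV[R]_7 := \col_k (match nat_of_ord k with 4 => al | 6 => be | _ => 0 end).
  have hz0 : z != 0.
    apply/eqP => /matrixP hz.
    have h4 := hz o4 0; have h6 := hz o6 0; rewrite !mxE /= in h4 h6.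
    move: h4 h6; rewrite /al /be; case: eqP => hc.
      by move=> _; apply/eqP; rewrite oner_eq0.
    by move=> h4; exfalso; apply: hc; lra.
  apply: (central_contra (z := z) hG (@nlam_killing R 0) (@nlam_trad R 0) hz0).
  + move=> j hj b; apply/matrixP => k j'; rewrite ord1 bra_bvec mxE.
    move: hj; rewrite mxE.
    case: j => [[|[|[|[|[|[|[|j]]]]]]] hj] //=; rewrite ?eqxx // => _;
    case: b => [[|[|[|[|[|[|[|b]]]]]]] hb] //;
    case: k => [[|[|[|[|[|[|[|k]]]]]]] hk] //; by rewrite /nlam /= ?oppr0.
  + move=> h; exfalso.
    have h1 := h o0 o2; have h2 := h o0 o5.
    rewrite !sum7 !LE !sum7 !mxE /nlam /= in h1 h2.
    rewrite !(mulr0, mulr1, mul0r, mul1r, addr0, add0r) in h1 h2.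
    have := ip_pos hG hz0; rewrite ipE !sum7.
    rewrite !mxE /= !(mulr0, mul0r, addr0, add0r).
    have -> : al * G o4 o4 * al + al * G o4 o6 * be + (be * G o6 o4 * al + be * G o6 o6 * be)
      = al * (G o4 o4 * al + G o4 o6 * be) + be * (G o6 o4 * al + G o6 o6 * be) by ring.
    by rewrite h1 h2 !mulr0 addr0 ltxx.
  + rewrite hRic; apply/matrixP => k j; rewrite ord1 !mxE sum7 !mxE /=.
    rewrite !(mulr0, mul0r, addr0, add0r).
    case: (ord7_cases k) => [->|[->|[->|[->|[->|[->|->]]]]]]; rewrite /= ?mulr0n ?mulr1n ?add0r.
    * by rewrite D04 D06 !mul0r addr0.
    * by rewrite D14 D16 !mul0r addr0.
    * by rewrite D24 D26 !mul0r addr0.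
    * by rewrite D34 D36 !mul0r addr0.
    * by rewrite hd4 D46 mul0r addr0 addrN mul0r.
    * by rewrite D54 D56 !mul0r addr0.
    * rewrite hd6 /al /be; case: eqP => hc; first by rewrite hc; field.
      by field.
- have c1 := hder o3 o1 o3; have c2 := hder o3 o0 o3; have c3 := hder o3 o0 o4;
  have c4 := hder o3 o1 o6; have c5 := hder o3 o0 o6.
  rewrite !sum7 /nlam /= in c1 c2 c3 c4 c5.
  rewrite !(mulr0, mulr1, addr0, add0r, oppr0, subr0, sub0r, subrr) in c1 c2 c3 c4 c5.
  have D03 : D o0 o3 = 0 by clear -c1; lra.
  have D13 : D o1 o3 = 0 by clear -c2; lra.
  have D23 : D o2 o3 = 0 by clear -c3; lra.
  have D43 : D o4 o3 = 0 by clear -c4; lra.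
  have D53 : D o5 o3 = 0 by clear -c5; lra.
  clear c1 c2 c3 c4 c5.
  pose al := cst / 2; pose be := if cst == 0 then 1 else D o6 o3.
  pose z : 'cV[R]_7 := \col_k (match nat_of_ord k with 3 => al | 6 => be | _ => 0 end).
  have hz0 : z != 0.
    apply/eqP => /matrixP hz.
    have h4 := hz o3 0; have h6 := hz o6 0; rewrite !mxE /= in h4 h6.
    move: h4 h6; rewrite /al /be; case: eqP => hc.
      by move=> _; apply/eqP; rewrite oner_eq0.
    by move=> h4; exfalso; apply: hc; lra.
  apply: (central_contra (z := z) hG (@nlam_killing R 1) (@nlam_trad R 1) hz0).
  + move=> j hj b; apply/matrixP => k j'; rewrite ord1 bra_bvec mxE.
    move: hj; rewrite mxE.
    case: j => [[|[|[|[|[|[|[|j]]]]]]] hj] //=; rewrite ?eqxx // => _;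
    case: b => [[|[|[|[|[|[|[|b]]]]]]] hb] //;
    case: k => [[|[|[|[|[|[|[|k]]]]]]] hk] //; by rewrite /nlam /= ?subrr.
  + move=> h; exfalso.
    have h1 := h o0 o1; have h2 := h o0 o5.
    rewrite !sum7 !LE !sum7 !mxE /nlam /= in h1 h2.
    rewrite !(mulr0, mulr1, mul0r, mul1r, addr0, add0r) in h1 h2.
    have := ip_pos hG hz0; rewrite ipE !sum7.
    rewrite !mxE /= !(mulr0, mul0r, addr0, add0r).
    have -> : al * G o3 o3 * al + al * G o3 o6 * be + (be * G o6 o3 * al + be * G o6 o6 * be)
      = al * (G o3 o3 * al + G o3 o6 * be) + be * (G o6 o3 * al + G o6 o6 * be) by ring.
    by rewrite h1 h2 !mulr0 addr0 ltxx.
  + rewrite hRic; apply/matrixP => k j; rewrite ord1 !mxE sum7 !mxE /=.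
    rewrite !(mulr0, mul0r, addr0, add0r).
    case: (ord7_cases k) => [->|[->|[->|[->|[->|[->|->]]]]]]; rewrite /= ?mulr0n ?mulr1n ?add0r.
    * by rewrite D03 D06 !mul0r addr0.
    * by rewrite D13 D16 !mul0r addr0.
    * by rewrite D23 D26 !mul0r addr0.
    * by rewrite hd3 D36 mul0r addr0 addrN mul0r.
    * by rewrite D43 D46 !mul0r addr0.
    * by rewrite D53 D56 !mul0r addr0.
    * rewrite hd6 /al /be; case: eqP => hc; first by rewrite hc; field.
      by field.
Qed.
End NotE.


Section Ein.
Variable R : realType.

Lemma tw_inj (i j : 'I_7) : tw (1 : R) 10 100 i = tw 1 10 100 j -> i = j.
Proof.
case: (ord7_cases i) => [->|[->|[->|[->|[->|[->|->]]]]]];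
case: (ord7_cases j) => [->|[->|[->|[->|[->|[->|->]]]]]] //; rewrite /tw /= => h;
exfalso; lra.
Qed.

Variable l : R.
Local Notation c := (nlam l).

Lemma nlam_off1 (i j a p : 'I_7) : i != j -> c i a p * c j a p = 0.
Proof.
move=> hij; apply/eqP; rewrite mulf_eq0; apply/negPn/negP; rewrite negb_or => /andP [h1 h2].
have := nlam_tw l 1 10 100 i a p; have := nlam_tw l 1 10 100 j a p.
move=> /eqP; rewrite mulf_eq0 (negbTE h2) /= => /eqP e2.
move=> /eqP; rewrite mulf_eq0 (negbTE h1) /= => /eqP e1.
have : i = j by apply: tw_inj; lra.
by move/eqP; rewrite (negbTE hij).
Qed.

Lemma nlam_off2 (i j a b : 'I_7) : i != j -> c a b i * c a b j = 0.
Proof.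
move=> hij; apply/eqP; rewrite mulf_eq0; apply/negPn/negP; rewrite negb_or => /andP [h1 h2].
have := nlam_tw l 1 10 100 a b i; have := nlam_tw l 1 10 100 a b j.
move=> /eqP; rewrite mulf_eq0 (negbTE h2) /= => /eqP e2.
move=> /eqP; rewrite mulf_eq0 (negbTE h1) /= => /eqP e1.
have : i = j by apply: tw_inj; lra.
by move/eqP; rewrite (negbTE hij).
Qed.


Lemma einstein_yes : l != 0 -> l != 1 -> einstein_nilradical c.
Proof.
move=> hl0 hl1.
set a := `|l - 1|; set b := `|l|.
have ha : 0 < a by rewrite normr_gt0 subr_eq0.
have hb : 0 < b by rewrite normr_gt0.
pose g (k : 'I_7) : R := match nat_of_ord k with 3 => a | 4 => b | _ => 1 end.
have hg k : g k != 0.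
  by rewrite /g; case: (nat_of_ord k) => [|[|[|[|[|?]]]]] //; rewrite ?oner_eq0 ?gt_eqF.
have hgp k : 0 < g k.
  by rewrite /g; case: (nat_of_ord k) => [|[|[|[|[|?]]]]] //.
pose G := diag_mx (\row_k g k).
pose s := 1 + a + b.
exists G; split.
  split; first exact: tr_diag_mx.
  move=> x hx; rewrite ipE.
  under eq_bigr do (under eq_bigr do rewrite mulrAC mulrC; rewrite diag_sumr).
  rewrite lt_neqAle sumr_ge0 ?andbT; last first.
    move=> i _; rewrite mxE; apply: mulr_ge0; first exact: ltW.
    by rewrite -expr2 sqr_ge0.
  rewrite eq_sym psumr_eq0; last first.
    move=> i _; rewrite mxE; apply: mulr_ge0; first exact: ltW.
    by rewrite -expr2 sqr_ge0.
  apply: contra hx => /allP h; apply/eqP/matrixP => i j; rewrite ord1 mxE.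
  have := h i (mem_index_enum i); rewrite mxE mulf_eq0 (gt_eqF (hgp i)) /=.
  by rewrite mulf_eq0 orbb => /eqP.
exists (- s), (diag_mx (\row_k tw (s / 2) (s / 2) (s / 2) k)); split.
  exact: diag_der (nlam_tw l _ _ _).
apply/matrixP => i j.
rewrite /ricci_op inv_diag // mul_diag_mx !mxE.
rewrite (ricci_formE _ (@nlam_killing R l) (@nlam_trad R l)) T1_diag // T3_diag //.
case: (eqVneq i j) => [<-|hij]; last first.
  rewrite !mulr0n addr0.
  rewrite [X in - (1/2) * X]big1; last first.
    by move=> a' _; apply: big1 => p _; rewrite nlam_off1 // !mul0r.
  rewrite [X in 1/4 * X]big1; last first.
    by move=> a' _; apply: big1 => b' _; rewrite nlam_off2 // !mul0r.
  by rewrite !mulr0 addr0 mulr0.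
rewrite !mulr1n !sum7.
have hA : a = l - 1 \/ a = - (l - 1).
  rewrite /a; case: (lerP 0 (l - 1)) => h; [left; exact: ger0_norm | right; exact: ltr0_norm].
have hB : b = l \/ b = - l.
  rewrite /b; case: (lerP 0 l) => h; [left; exact: ger0_norm | right; exact: ltr0_norm].
have hl1' : l - 1 != 0 by rewrite subr_eq0.
case: (ord7_cases i) => [->|[->|[->|[->|[->|[->|->]]]]]];
  rewrite /nlam /g /tw /= !(mulr0, mul0r, addr0, add0r, mulr1, mul1r).
all: by rewrite /s; case: hA => ->; case: hB => ->; field;
  rewrite ?oppr_eq0 ?hl0 ?hl1' ?mulf_neq0 ?oppr_eq0 ?hl0 ?hl1'.
Qed.

End Ein.

Theorem mainTheorem19 (R : realType) (l : R) :
  einstein_nilradical (nlam l) <-> (l <> 0 /\ l <> 1).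
Proof.
split.
- move=> hE; split => hl.
  + by apply: (not_einstein (l := l)) => //; left.
  + by apply: (not_einstein (l := l)) => //; right.
- move=> [h0 h1]; apply: einstein_yes; apply/eqP; [exact: h0 | exact: h1].
Qed.
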